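(* Let $K$ be a field, $P=K[x_1,\dots,x_n]$, $I$ an ideal of $P$ contained in $\mathfrak{M}=\langle x_1,\dots,x_n\rangle$, $\mathfrak{m}=\mathfrak{M}/I$, and let $\overline G$ be a marked reduced Gröbner basis of $I$. (a) $\#\mathrm{LI}(\overline G)\le\dim_K(\mathrm{Lin}_{\mathfrak M}(I))$. (b) $\dim_K(\mathrm{Cot}_{\mathfrak m}(P/I))\le\mathrm{edim}(P/I)\le\mathrm{sepdim}(P/I)\le n-\#\mathrm{LI}(\overline G)$.
   Context: $\mathrm{Cot}_{\mathfrak m}(R)=\mathfrak m/\mathfrak m^2$. For $f\in\mathfrak M$, $\mathrm{Lin}_{\mathfrak M}(f)$ is the homogeneous degree-one part of $f$, and $\mathrm{Lin}_{\mathfrak M}(I)=\langle\mathrm{Lin}_{\mathfrak M}(f)\mid f\in I\rangle_K$. A marked reduced Gröbner basis of $I$ is $\{(\mathrm{LT}_\sigma(g),g)\mid g\in G\}$ with $G$ the reduced $\sigma$-Gröbner basis of $I$ for a term ordering $\sigma$; $\mathrm{LI}(\overline G)$ is the set of indeterminates occurring as marked leading terms in $\overline G$. The embedding dimension $\mathrm{edim}(P/I)$ is the minimal $m$ such that $P/I\cong K[y_1,\dots,y_m]/I'$ as $K$-algebras for some ideal $I'$. For $f\in P$, $\mathrm{indets}(f)$ is the set of indeterminates dividing some term in the support of $f$; for $f\in\mathfrak M$ with $z$ occurring in $\mathrm{Lin}_{\mathfrak M}(f)$ with coefficient $c\ne 0$ in $f$, $\mathrm{tail}_z(f)=z-\frac1cf$,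 and $f$ is $z$-separating if $z\notin\mathrm{indets}(\mathrm{tail}_z(f))$. For distinct indeterminates $Z=\{z_1,\dots,z_s\}$, a tuple $(f_1,\dots,f_s)$ of nonzero elements of $\mathfrak M$ is coherently $Z$-separating if each $f_i$ is $z_i$-separating and $z_i\notin\mathrm{indets}(f_j)$ for $j\ne i$. The separating embedding dimension is $\mathrm{sepdim}(P/I)=n-\max\{\#Z\mid Z\subseteq X,\ I \text{ contains a coherently } Z\text{-separating tuple}\}$ (with $Z=\emptyset$ allowed). *)

(* Defs.v *)
From HB Require Import structures.
From mathcomp Require Import all_boot all_order all_algebra.
From mathcomp Require Import generic_quotient ring_quotient.
From mathcomp Require Import mpoly.
From Stdlib Require Import ClassicalDescription.

Set Implicit Arguments.
Unset Strict Implicit.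
Unset Printing Implicit Defensive.

Import Order.TTheory GRing.Theory.
Local Open Scope ring_scope.
Local Open Scope quotient_scope.

Definition asbool (P : Prop) : bool :=
  if excluded_middle_informative P then true else false.

Lemma asboolP (P : Prop) : reflect P (asbool P).
Proof. by rewrite /asbool; case: excluded_middle_informative => h; constructor. Qed.

Section Defs.
Variables (K : fieldType) (n : nat).
Local Notation P := {mpoly K[n]}.

Definition inM (p : P) : Prop :=
  exists h : 'I_n -> P, p = \sum_(i < n) h i * 'X_i.

Definition term_ordering (le : rel 'X_{1..n}) : Prop :=
  [/\ [/\ reflexive le, antisymmetric le, transitive le & total le],
      (forall m, le 0%MM m) &
      (forall m1 m2 m, le m1 m2 -> le (m1 + m)%MM (m2 + m)%MM)].

(* LT_sigma(p): the le-largest term in the support of p (0%MM for p = 0). *)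
Definition LT (le : rel 'X_{1..n}) (p : P) : 'X_{1..n} :=
  foldr (fun m acc => if le acc m then m else acc) 0%MM (msupp p).

(* G is the reduced sigma-Groebner basis of I (le = sigma).
   Term divisibility is (m1 <= m2)%MM. *)
Definition is_reduced_GB (le : rel 'X_{1..n}) (I : idealr P) (G : seq P) : Prop :=
  [/\ forall g, g \in G -> g \in I /\ g != 0,
      (* Groebner basis: leading terms of G generate LT_sigma(I) *)
      forall f, f \in I -> f != 0 -> exists2 g, g \in G & (LT le g <= LT le f)%MM,
      forall g, g \in G -> g@_(LT le g) = 1 &
      forall g g' m, g \in G -> g' \in G -> m \in msupp g ->
        (LT le g' <= m)%MM -> g' = g /\ m = LT le g].

Definition LI (le : rel 'X_{1..n}) (G : seq P) : {set 'I_n} :=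
  [set i : 'I_n | has (fun g => LT le g == U_(i)%MM) G].

(* Lin_M(f) = sum_i f_{x_i} x_i, encoded by its coefficient row vector
   (identifying the linear forms of P with K^n via the basis x_1..x_n). *)
Definition linrow (f : P) : 'rV[K]_n := \row_(i < n) f@_(U_(i)%MM).

Definition LinI (I : idealr P) (v : 'rV[K]_n) : Prop :=
  exists2 f, f \in I & v = linrow f.

Definition is_span (V : {vspace 'rV[K]_n}) (S : 'rV[K]_n -> Prop) : Prop :=
  (forall v, S v -> v \in V) /\
  (forall W : {vspace 'rV[K]_n}, (forall v, S v -> v \in W) -> (V <= W)%VS).

Definition indets (f : P) : {set 'I_n} :=
  [set i : 'I_n | has (fun m : 'X_{1..n} => (0 < m i)%N) (msupp f)].

Definition tail (i : 'I_n) (f : P) : P := 'X_i - (f@_(U_(i)%MM))^-1 *: f.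

Definition separating (i : 'I_n) (f : P) : Prop :=
  [/\ inM f, f@_(U_(i)%MM) != 0 & i \notin indets (tail i f)].

Definition has_coh_sep (I : idealr P) (Z : {set 'I_n}) : Prop :=
  exists F : 'I_n -> P, forall i, i \in Z ->
    [/\ F i \in I, F i != 0, separating i (F i) &
        forall j, j \in Z -> j != i -> i \notin indets (F j)].

Definition sepdim (I : idealr P) : nat :=
  (n - \max_(Z : {set 'I_n} | asbool (has_coh_sep I Z)) #|Z|)%N.

Definition mQ (I : idealr P) (x : {ideal_quot I}) : Prop :=
  exists2 p, inM p & x = \pi_({ideal_quot I}) p.

Definition mQ2 (I : idealr P) (x : {ideal_quot I}) : Prop :=
  exists s : seq ({ideal_quot I} * {ideal_quot I}),
    (forall u, u \in s -> mQ u.1 /\ mQ u.2) /\ x = \sum_(u <- s) u.1 * u.2.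

(* Cot_m(P/I) = m/m^2 contains d K-linearly independent elements
   (the K-action on P/I is c.x = pi(c) * x). *)
Definition cot_free (I : idealr P) (d : nat) : Prop :=
  exists v : 'I_d -> {ideal_quot I}, (forall i, mQ (v i)) /\
    forall c : 'I_d -> K,
      mQ2 (\sum_(i < d) \pi_({ideal_quot I}) ((c i)%:MP) * v i) ->
      forall i, c i = 0.

End Defs.

Definition kalg_iso (K : fieldType) (n m : nat) (I : idealr {mpoly K[n]})
  (I' : idealr {mpoly K[m]}) (f : {ideal_quot I} -> {ideal_quot I'}) : Prop :=
  [/\ forall x y, f (x + y) = f x + f y,
      forall x y, f (x * y) = f x * f y,
      f 1 = 1,
      forall (c : K) x, f (\pi_({ideal_quot I}) (c%:MP) * x)
                        = \pi_({ideal_quot I'}) (c%:MP) * f x &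
      bijective f].

Definition edim_le (K : fieldType) (n : nat) (I : idealr {mpoly K[n]}) (m : nat) : Prop :=
  exists (I' : idealr {mpoly K[m]}) (f : {ideal_quot I} -> {ideal_quot I'}),
    kalg_iso f.

Lemma edim_exists (K : fieldType) (n : nat) (I : idealr {mpoly K[n]}) :
  exists m, asbool (edim_le I m).
Proof.
exists n; apply/asboolP; exists I, id; split=> //; by exists id.
Qed.

Definition edim (K : fieldType) (n : nat) (I : idealr {mpoly K[n]}) : nat :=
  ex_minn (edim_exists I).

(* Main.v *)
Require Import Defs.
From HB Require Import structures.
From mathcomp Require Import all_boot all_order all_algebra.
From mathcomp Require Import generic_quotient ring_quotient.
From mathcomp Require Import mpoly.
Set Implicit Arguments.
Unset Strict Implicit.
Unset Printing Implicit Defensive.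
Import GRing.Theory.
Local Open Scope ring_scope.
Local Open Scope quotient_scope.

Section PartA.
Variables (K : fieldType) (n : nat) (I : idealr {mpoly K[n]}).
Variable (le : rel 'X_{1..n}) (G : seq {mpoly K[n]}).
Hypothesis HG : is_reduced_GB le I G.

Lemma U_le (i : 'I_n) (m : 'X_{1..n}) : (U_(i) <= m)%MM = (0 < m i)%N.
Proof.
apply/mnm_lepP/idP => [/(_ i)|h j]; first by rewrite mnm1E eqxx.
by rewrite mnm1E; case: eqP => [<-|].
Qed.

Lemma U_inj (i j : 'I_n) : U_(i)%MM = U_(j)%MM -> i = j.
Proof. by move/mnmP/(_ i); rewrite !mnm1E eqxx; case: eqP. Qed.

Definition gsel (i : 'I_n) : {mpoly K[n]} :=
  nth 0 G (find (fun g => LT le g == U_(i)%MM) G).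

Lemma gselP i : i \in LI le G -> [/\ gsel i \in G, LT le (gsel i) = U_(i)%MM & gsel i \in I].
Proof.
rewrite inE => h.
have hm : gsel i \in G by rewrite /gsel mem_nth // -has_find.
have := nth_find 0 h; rewrite -/(gsel i) => /eqP e.
case: HG => H1 _ _ _; split => //; exact: (H1 _ hm).1.
Qed.

Lemma red i h m : i \in LI le G -> h \in G -> m \in msupp h -> (0 < m i)%N ->
  h = gsel i /\ m = LT le h.
Proof.
move=> /gselP [g1 g2 _] hG hm mi.
case: HG => _ _ _ H4; have [] := H4 h (gsel i) m hG g1 hm; first by rewrite g2 U_le.
by move=> ->.
Qed.

Lemma gsel_coef i j : i \in LI le G -> j \in LI le G ->
  (gsel i)@_(U_(j)%MM) = (i == j)%:R.
Proof.
move=> hi hj; have [g1 g2 _] := gselP hi.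
case: eqP => [<-|nij].
  by case: HG => _ _ H3 _; rewrite -g2 H3.
apply/eqP; rewrite mcoeff_eq0; apply/negP => hm.
have hj0 : (0 < U_(j)%MM j)%N by rewrite mnm1E eqxx.
have [e1 e2] := red hj g1 hm hj0.
by apply: nij; apply: U_inj; rewrite -g2 e2.
Qed.

Lemma coh_LI : (forall f, f \in I -> inM f) -> has_coh_sep I (LI le G).
Proof.
move=> HIM; exists gsel => i hi; have [g1 g2 g3] := gselP hi.
split => //.
- by case: HG => H1 _ _ _; exact: (H1 _ g1).2.
- split; first exact: HIM.
  + by rewrite gsel_coef // eqxx oner_eq0.
  rewrite /tail gsel_coef // eqxx invr1 scale1r inE; apply/hasP => -[m].
  rewrite mcoeff_msupp mcoeffB mcoeffX => hm mi.
  have [e|ne] := eqVneq U_(i)%MM m.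
    by move: hm; rewrite -e eqxx gsel_coef // eqxx subrr eqxx.
  move: hm; rewrite (negbTE ne) sub0r oppr_eq0 -mcoeff_msupp => hm.
  have [_ e] := red hi g1 hm mi; by move: ne; rewrite e g2 eqxx.
- move=> j hj nji; rewrite inE; apply/hasP => -[m hm mi].
  have [hj1 hj2 _] := gselP hj.
  have [e1 _] := red hi hj1 hm mi.
  by move: nji; rewrite (U_inj (_ : U_(j)%MM = U_(i)%MM)) ?eqxx // -hj2 e1 g2.
Qed.

Lemma partA (V : {vspace 'rV[K]_n}) : is_span V (LinI I) -> (#|LI le G| <= \dim V)%N.
Proof.
move=> [HV _].
pose X := [seq linrow (gsel i) | i <- enum (LI le G)].
have sX : size X = #|LI le G| by rewrite size_map -cardE.
have XV : (<<X>> <= V)%VS.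
  apply/span_subvP => v /mapP [i]; rewrite mem_enum => hi ->.
  apply: HV; exists (gsel i) => //; by have [] := gselP hi.
have fX : free X.
  have -> : X = in_tuple X by [].
  apply/freeP => k hk j.
  have jlt : (j < size (enum (LI le G)))%N by rewrite -cardE -sX.
  have [i0 _] : exists i0 : 'I_n, true.
    by case E: (enum (LI le G)) jlt => [|i0 s] //; exists i0.
  set e := enum (LI le G).
  have sXe : size X = size e by rewrite size_map.
  have he x : (x < size X)%N -> (in_tuple X)`_x = linrow (gsel (nth i0 e x)).
    by move=> hx; rewrite /= (nth_map i0) // -sXe.
  have hin x : (x < size X)%N -> nth i0 e x \in LI le G.
    by move=> hx; rewrite -mem_enum mem_nth // -sXe.
  have := congr1 (fun v : 'rV_n => v ord0 (nth i0 e j)) hk.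
  rewrite summxE mxE (bigD1 j) //= big1 ?addr0.
    by rewrite !mxE he // mxE gsel_coef ?hin // eqxx mulr1.
  move=> x nxj; rewrite !mxE he // mxE gsel_coef ?hin //.
  rewrite nth_uniq ?enum_uniq ?(negbTE nxj) ?mulr0 // -?sXe //.
  by move: nxj; rewrite -val_eqE => /negbTE ->; rewrite mulr0.
by have := dimvS XV; rewrite (eqP fX) sX.
Qed.
End PartA.

Definition preI (R S : comNzRingType) (a : {rmorphism R -> S}) (I : idealr S) : {pred R} :=
  [pred q | a q \in I].

Lemma preI_closed (R S : comNzRingType) (a : {rmorphism R -> S}) (I : idealr S) :
  idealr_closed (preI a I).
Proof.
split; rewrite ?inE ?rmorph0 ?rmorph1 ?idealr0 ?idealr1 //.
move=> c u v; rewrite !inE => hu hv; rewrite rmorphD rmorphM rpredD //.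
exact: idealMr.
Qed.

Definition preIdeal (R S : comNzRingType) (a : {rmorphism R -> S}) (I : idealr S) : idealr R :=
  HB.pack_for (idealr R) (preI a I) (isIdealr.Build R (preI a I) (preI_closed a I)).

Lemma preIdealE (R S : comNzRingType) (a : {rmorphism R -> S}) (I : idealr S) q :
  (q \in preIdeal a I) = (a q \in I).
Proof. by []. Qed.
Section Ext.
Variables (K : fieldType) (n : nat) (S : comNzRingType).

Lemma rmorph_ext_on (f1 f2 : {rmorphism {mpoly K[n]} -> S}) (p : {mpoly K[n]}) :
  (forall c, f1 c%:MP = f2 c%:MP) ->
  (forall i, i \in indets p -> f1 'X_i = f2 'X_i) -> f1 p = f2 p.
Proof.
move=> hc hx; rewrite (mpolyE p) !raddf_sum; apply: eq_big_seq => m hm /=.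
rewrite -mul_mpolyC !rmorphM hc mpolyXE_id !rmorph_prod; congr (_ * _).
apply: eq_bigr => i _; rewrite !rmorphXn.
case: (posnP (m i)) => [->|mi]; first by rewrite !expr0.
by rewrite hx // inE; apply/hasP; exists m.
Qed.

End Ext.

Lemma piE0 (R : comNzRingType) (I : idealr R) (x : R) :
  (\pi_({ideal_quot I}) x == 0) = (x \in I).
Proof. by rewrite -[x]subr0 Quotient.idealrBE rmorph0 subr0. Qed.

Lemma pi_eq (R : comNzRingType) (I : idealr R) (x y : R) :
  (\pi_({ideal_quot I}) x == \pi_({ideal_quot I}) y) = (x - y \in I).
Proof. by rewrite -piE0 rmorphB subr_eq0. Qed.

Lemma indets_B (K : fieldType) (n : nat) (p q : {mpoly K[n]}) c j :
  j \notin indets p -> j \notin indets q -> j \notin indets (p - c *: q).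
Proof.
rewrite !inE => /hasPn hp /hasPn hq; apply/hasPn => m /msuppB_le.
rewrite mem_cat => /orP [/hp //| /msuppZ_le /hq //].
Qed.

Lemma indets_X (K : fieldType) (n : nat) (i j : 'I_n) : j != i -> j \notin indets ('X_i : {mpoly K[n]}).
Proof.
move=> ji; rewrite inE msuppX /= orbF mnm1E; by rewrite eq_sym (negbTE ji).
Qed.

Section Elim.
Variables (K : fieldType) (n : nat) (I : idealr {mpoly K[n]}) (Z : {set 'I_n}) (F : 'I_n -> {mpoly K[n]}).
Hypothesis HF : forall i, i \in Z -> [/\ F i \in I, F i != 0, separating i (F i) &
        forall j, j \in Z -> j != i -> i \notin indets (F j)].

Local Notation m := #|~: Z|.
Definition ee (j : 'I_m) : 'I_n := enum_val j.

Lemma ee_notin j : ee j \notin Z.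
Proof. by have := enum_valP j; rewrite inE. Qed.

Lemma ee_surj i : i \notin Z -> exists j, ee j = i.
Proof.
move=> hi; have hi' : i \in ~: Z by rewrite inE.
by exists (enum_rank_in hi' i); rewrite /ee enum_rankK_in.
Qed.

Definition rr (i : 'I_n) : {mpoly K[m]} := if [pick j | ee j == i] is Some j then 'X_j else 0.

Lemma rr_e j : rr (ee j) = 'X_j.
Proof.
rewrite /rr; case: pickP => [j' /eqP /enum_val_inj -> // | /(_ j)]; by rewrite eqxx.
Qed.

Definition al := mmap (@mpolyC n K) (fun j : 'I_m => 'X_(ee j)).
Definition rho := mmap (@mpolyC m K) rr.
Definition be := mmap (@mpolyC m K) (fun i => if i \in Z then rho (tail i (F i)) else rr i).

HB.instance Definition _ := GRing.RMorphism.copy al (mmap (@mpolyC n K) (fun j : 'I_m => 'X_(ee j))).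
HB.instance Definition _ := GRing.RMorphism.copy rho (mmap (@mpolyC m K) rr).
HB.instance Definition _ := GRing.RMorphism.copy be (mmap (@mpolyC m K) (fun i => if i \in Z then rho (tail i (F i)) else rr i)).

Lemma beC c : be c%:MP = c%:MP.
Proof. by rewrite /be mmapC. Qed.

Lemma al_X j : al 'X_j = 'X_(ee j).
Proof. by rewrite /al mmapX mmap1U. Qed.

Lemma al_rr i : i \notin Z -> al (rr i) = 'X_i.
Proof. by move=> /ee_surj [j <-]; rewrite rr_e al_X. Qed.

Lemma al_rho t : (forall i, i \in Z -> i \notin indets t) -> al (rho t) = t.
Proof.
move=> ht; have := @rmorph_ext_on K n _ (al \o rho) idfun t; apply.
  by move=> c /=; rewrite /rho /al !mmapC.
move=> i hi /=; rewrite /rho mmapX mmap1U; apply: al_rr.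
by apply/negP => /ht; rewrite hi.
Qed.

Lemma tail_avoid i j : i \in Z -> j \in Z -> j \notin indets (tail i (F i)).
Proof.
move=> hi hj; have [_ _ [_ _ hs] _] := HF hi.
have [->|ji] := eqVneq j i; first exact: hs.
apply: indets_B; first exact: indets_X.
have [_ _ _ h] := HF hj; apply: h => //; by rewrite eq_sym.
Qed.

Lemma K2 p : \pi_({ideal_quot I}) (al (be p)) = \pi_({ideal_quot I}) p.
Proof.
have := @rmorph_ext_on K n _ (\pi_({ideal_quot I}) \o al \o be) \pi_({ideal_quot I}) p; apply.
  by move=> c /=; rewrite /be /al !mmapC.
move=> i _; change (\pi_({ideal_quot I}) (al (be 'X_i)) = \pi_({ideal_quot I}) 'X_i).
rewrite /be mmapX mmap1U -/be.
case: ifP => hi; last by rewrite al_rr ?hi.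
rewrite al_rho; last by move=> j hj; apply: tail_avoid.
apply/eqP; rewrite pi_eq /tail addrAC subrr sub0r rpredN.
have [hF _ [_ hc _] _] := HF hi.
by rewrite -mul_mpolyC idealMr.
Qed.

Local Notation Q := {ideal_quot I}.
Definition I' : idealr {mpoly K[m]} := preIdeal al I.
Local Notation Q' := {ideal_quot I'}.

Definition fq (x : Q) : Q' := \pi_Q' (be (repr x)).
Definition gq (y : Q') : Q := \pi_Q (al (repr y)).

Lemma fpi p : fq (\pi_Q p) = \pi_Q' (be p).
Proof.
rewrite /fq; apply/eqP; rewrite pi_eq preIdealE.
have -> : be (repr (\pi_Q p)) - be p = be (repr (\pi_Q p) - p) by rewrite rmorphB.
by rewrite -piE0 K2 piE0 -pi_eq reprK.
Qed.

Lemma gpi q : gq (\pi_Q' q) = \pi_Q (al q).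
Proof.
rewrite /gq; apply/eqP; rewrite pi_eq -rmorphB -preIdealE -/I' -pi_eq reprK //.
Qed.

Lemma quot_ex (x : Q) : exists p, x = \pi_Q p.
Proof. by exists (repr x); rewrite reprK. Qed.
Lemma quot_ex' (x : Q') : exists p, x = \pi_Q' p.
Proof. by exists (repr x); rewrite reprK. Qed.

Lemma elim_iso : kalg_iso fq.
Proof.
split.
- move=> x y; have [p ->] := quot_ex x; have [q ->] := quot_ex y.
  by rewrite -rmorphD !fpi rmorphD rmorphD.
- move=> x y; have [p ->] := quot_ex x; have [q ->] := quot_ex y.
  by rewrite -rmorphM !fpi rmorphM rmorphM.
- by rewrite -(rmorph1 \pi_Q) fpi rmorph1 rmorph1.
- move=> c x; have [p ->] := quot_ex x.
  by rewrite -rmorphM !fpi rmorphM /= beC rmorphM.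
exists gq.
- move=> x; have [p ->] := quot_ex x; rewrite fpi gpi /=; exact: K2.
- move=> y; have [q ->] := quot_ex' y; rewrite gpi fpi.
  apply/eqP; rewrite (pi_eq I') preIdealE rmorphB /= -pi_eq K2 //.
Qed.

Lemma elim_edim : edim_le I m.
Proof. exists I', fq; exact: elim_iso. Qed.

End Elim.

Lemma inM_coef0 (K : fieldType) (n : nat) (p : {mpoly K[n]}) : inM p -> p@_0%MM = 0.
Proof.
move=> [h ->]; rewrite raddf_sum big1 // => i _ /=.
by rewrite (mcoeff0_is_multiplicative _ _).1 mcoeffX mnm1_eq0 mulr0.
Qed.


Definition fi (n : nat) (m : 'X_{1..n}) : option 'I_n := [pick i | (0 < m i)%N].

Lemma fi_None n (m : 'X_{1..n}) : fi m = None -> m = 0%MM.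
Proof.
rewrite /fi; case: pickP => // h _; apply/mnmP => i; rewrite mnm0E.
by have := h i; case: (m i).
Qed.

Lemma fi_Some n (m : 'X_{1..n}) i : fi m = Some i -> (m - U_(i) + U_(i))%MM = m.
Proof.
rewrite /fi; case: pickP => // j hj [<-]; by rewrite submK // U_le.
Qed.

Lemma coef0_inM (K : fieldType) (n : nat) (p : {mpoly K[n]}) : p@_0%MM = 0 -> inM p.
Proof.
move=> h0.
exists (fun i => \sum_(m <- msupp p | fi m == Some i) p@_m *: 'X_[m - U_(i)]).
symmetry; under eq_bigr => i _ do rewrite mulr_suml.
rewrite (exchange_big_dep xpredT) //= [RHS](mpolyE p); apply: eq_bigr => m _.
case E: (fi m) => [i0|].
  rewrite (big_pred1 i0) => [|i]; last by rewrite eq_sym.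
  by rewrite -scalerAl -mpolyXD fi_Some.
by rewrite big_pred0 // (fi_None E) h0 scale0r.
Qed.

Definition mkRM (R S : comNzRingType) (f : R -> S) (h1 : zmod_morphism f) (h2 : monoid_morphism f)
  : {rmorphism R -> S} :=
  HB.pack_for {rmorphism R -> S} f (GRing.isZmodMorphism.Build R S f h1) (GRing.isMonoidMorphism.Build R S f h2).
Lemma mkRME (R S : comNzRingType) (f : R -> S) h1 h2 x : @mkRM R S f h1 h2 x = f x.
Proof. by []. Qed.

Lemma mmapCM (K : fieldType) (n k : nat) (h : 'I_n -> {mpoly K[k]}) c p :
  mmap (@mpolyC k K) h (c *: p) = c *: mmap (@mpolyC k K) h p.
Proof. by rewrite -!mul_mpolyC rmorphM /= mmapC. Qed.

Section Cot.
Variables (K : fieldType) (n k : nat) (I : idealr {mpoly K[n]}).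
Hypothesis HIM : forall f, f \in I -> inM f.
Variables (I' : idealr {mpoly K[k]}).
Local Notation Q := {ideal_quot I}.
Local Notation Q' := {ideal_quot I'}.
Variables (f : Q -> Q') (g : Q' -> Q).
Hypotheses (fD : forall x y, f (x + y) = f x + f y) (fM : forall x y, f (x * y) = f x * f y)
  (f1 : f 1 = 1)
  (fZ : forall (c : K) x, f (\pi_Q (c%:MP) * x) = \pi_Q' (c%:MP) * f x)
  (fg : cancel f g) (gf : cancel g f).

Lemma qex (x : Q) : exists p, x = \pi_Q p.
Proof. by exists (repr x); rewrite reprK. Qed.

Lemma f0 : f 0 = 0.
Proof. by apply: (addrI (f 0)); rewrite -fD !addr0. Qed.

Lemma fB : zmod_morphism f.
Proof.
move=> x y; rewrite fD; congr (_ + _).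
by apply: (addrI (f y)); rewrite -fD !subrr f0.
Qed.

Definition fR := mkRM fB (conj f1 fM).

Lemma gB : zmod_morphism g.
Proof. by move=> x y; apply: (can_inj fg); rewrite fB !gf. Qed.

Lemma gmon : monoid_morphism g.
Proof.
split; first by apply: (can_inj fg); rewrite f1 gf.
by move=> x y; apply: (can_inj fg); rewrite fM !gf.
Qed.

Definition gR := mkRM gB gmon.

Definition Phi (x : Q) : K := (repr x)@_0%MM.

Lemma Phi_pi p : Phi (\pi_Q p) = p@_0%MM.
Proof.
rewrite /Phi; apply/eqP; rewrite -subr_eq0 -mcoeffB; apply/eqP.
apply: inM_coef0; apply: HIM; rewrite -pi_eq reprK //.
Qed.

Lemma PhiB : zmod_morphism Phi.
Proof.
move=> x y; have [p ->] := qex x; have [q ->] := qex y.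
by rewrite -rmorphB !Phi_pi mcoeffB.
Qed.

Lemma Phimon : monoid_morphism Phi.
Proof.
split; first by rewrite -(rmorph1 \pi_Q) Phi_pi mcoeff1 eqxx.
move=> x y; have [p ->] := qex x; have [q ->] := qex y.
by rewrite -rmorphM !Phi_pi (mcoeff0_is_multiplicative _ _).1.
Qed.

Definition PhiR := mkRM PhiB Phimon.

Lemma mQ_Phi x : mQ x <-> Phi x = 0.
Proof.
split; first by move=> [p hp ->]; rewrite Phi_pi inM_coef0.
have [p ->] := qex x; rewrite Phi_pi => h; exists p => //; exact: coef0_inM.
Qed.

Lemma gC c : g (\pi_Q' c%:MP) = \pi_Q c%:MP.
Proof. by apply: (can_inj fg); rewrite gf -[\pi_Q _]mulr1 fZ f1 mulr1. Qed.

Definition om := gR \o \pi_Q'.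
Definition aa (j : 'I_k) : K := Phi (g (\pi_Q' 'X_j)).

Local Notation T := (mmap (@mpolyC k K) (fun j => 'X_j + (aa j)%:MP)).
Local Notation Sv := (mmap (@mpolyC k K) (fun j => 'X_j - (aa j)%:MP)).

Lemma ST p : Sv (T p) = p.
Proof.
have := @rmorph_ext_on K k _ (Sv \o T) idfun p; apply.
  by move=> c /=; rewrite !mmapC.
move=> j _ /=; rewrite mmapX mmap1U rmorphD /= mmapX mmap1U mmapC.
by rewrite subrK.
Qed.

Lemma chiT p : (T p)@_0%MM = Phi (om p).
Proof.
have := @rmorph_ext_on K k _ (mcoeff 0%MM \o T) (PhiR \o om) p; apply.
  by move=> c /=; rewrite mmapC mcoeffC eqxx mulr1 gC Phi_pi mcoeffC eqxx mulr1.
move=> j _ /=; rewrite mmapX mmap1U mcoeffD mcoeffX mnm1_eq0 add0r mcoeffC eqxx mulr1.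
by [].
Qed.

Definition psi := om \o Sv.

Lemma Phi_psi p : Phi (psi p) = p@_0%MM.
Proof.
have := @rmorph_ext_on K k _ (PhiR \o psi) (mcoeff 0%MM) p; apply.
  by move=> c /=; rewrite mmapC /= gC Phi_pi !mcoeffC !eqxx.
move=> j _ /=; rewrite mmapX mmap1U rmorphB /= gB PhiB gC Phi_pi.
by rewrite mcoeffC eqxx mulr1 mcoeffX mnm1_eq0 subrr.
Qed.

Lemma fi_msupp (r : {mpoly K[k]}) m : r@_0%MM = 0 -> m \in msupp r -> fi m = None -> False.
Proof. by move=> h0 hm E; move: hm; rewrite (fi_None E) mcoeff_msupp h0 eqxx. Qed.

Lemma psi_sum (s : seq 'X_{1..k}) (F : 'X_{1..k} -> {mpoly K[k]}) :
  psi (\sum_(i <- s) F i) = \sum_(i <- s) psi (F i).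
Proof. exact: (raddf_sum (psi : {rmorphism {mpoly K[k]} -> Q})). Qed.

Lemma psiM x y : psi (x * y) = psi x * psi y.
Proof. exact: (rmorphM (psi : {rmorphism {mpoly K[k]} -> Q})). Qed.

Lemma psi_mQ2 r : r@_0%MM = 0 -> (forall j, r@_(U_(j)%MM) = 0) -> mQ2 (psi r).
Proof.
move=> h0 h1.
pose pr (m : 'X_{1..k}) : Q * Q := if fi m is Some i then
  (psi ((r@_m)%:MP * 'X_i), psi 'X_[m - U_(i)]) else (0, 0).
exists [seq pr m | m <- msupp r]; split.
- move=> u /mapP [m hm ->]; rewrite /pr.
  case E: (fi m) => [i|]; last by case: (fi_msupp h0 hm E).
  rewrite !mQ_Phi !Phi_psi; split.
    by rewrite mcoeffCM mcoeffX mnm1_eq0 mulr0.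
  rewrite mcoeffX; case: eqP => // h; move: hm.
  by rewrite -(fi_Some E) h add0m mcoeff_msupp h1 eqxx.
- rewrite big_map {1}[r]mpolyE psi_sum.
  apply: eq_big_seq => m hm.
  rewrite /pr; case E: (fi m) => [i|]; last by case: (fi_msupp h0 hm E).
  rewrite /= -psiM -mulrA -mpolyXD addmC fi_Some // mul_mpolyC //.
Qed.

Lemma cot_le d : cot_free I d -> (d <= k)%N.
Proof.
move=> [v [hv hind]].
pose p i := repr (f (v i)).
pose L q : 'rV[K]_k := \row_(j < k) (T q)@_(U_(j)%MM).
pose X := [tuple L (p i) | i < d].
have fX : free X.
  apply/freeP => c hc i; apply: hind => {i}.
  pose q := \sum_(i < d) c i *: p i.
  have eq0 : om q = \sum_(i < d) \pi_Q (c i)%:MP * v i.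
    rewrite /om /= -[RHS]fg; congr (g _).
    have -> : f (\sum_(i < d) \pi_Q (c i)%:MP * v i) = \sum_(i < d) f (\pi_Q (c i)%:MP * v i).
      exact: (rmorph_sum fR).
    rewrite rmorph_sum; apply: eq_bigr => i _.
    by rewrite fZ -mul_mpolyC rmorphM /p /= reprK.
  have -> : \sum_(i < d) \pi_Q (c i)%:MP * v i = psi (T q) by rewrite /psi /= ST eq0.
  apply: psi_mQ2.
  - rewrite chiT eq0.
    have -> : Phi (\sum_(i < d) \pi_Q (c i)%:MP * v i) = \sum_(i < d) Phi (\pi_Q (c i)%:MP * v i).
      exact: (rmorph_sum PhiR).
    rewrite big1 // => i _.
    have -> : Phi (\pi_Q (c i)%:MP * v i) = Phi (\pi_Q (c i)%:MP) * Phi (v i) by exact: (rmorphM PhiR).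
    by have /mQ_Phi -> := hv i; rewrite mulr0.
  - move=> j; have := congr1 (fun w : 'rV_k => w 0 j) hc.
    rewrite summxE mxE => <-.
    rewrite /q (raddf_sum (mmap (@mpolyC k K) (fun j0 => 'X_j0 + (aa j0)%:MP))) raddf_sum.
    apply: eq_bigr => i _.
    by rewrite /= mmapCM mcoeffZ !mxE nth_mktuple mxE.
have := dimvS (subvf <<X>>); rewrite (eqP fX) dimvf size_tuple /dim /= mul1n //.
Qed.
End Cot.


Local Close Scope quotient_scope.
Unset Implicit Arguments.
Set Strict Implicit.
Set Printing Implicit Defensive.

Theorem theorem4p1 (K : fieldType) (n : nat) (I : idealr {mpoly K[n]})
  (HIM : forall f, f \in I -> inM f)
  (le : rel 'X_{1..n}) (Hle : term_ordering le)
  (G : seq {mpoly K[n]}) (HG : is_reduced_GB le I G) :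
  (* (a)  #LI(G) <= dim_K Lin_M(I) *)
  (forall V : {vspace 'rV[K]_n}, is_span V (LinI I) -> (#|LI le G| <= \dim V)%N) /\
  (* (b)  dim_K Cot_m(P/I) <= edim(P/I) <= sepdim(P/I) <= n - #LI(G) *)
  [/\ (forall d, cot_free I d -> (d <= edim I)%N),
      (edim I <= sepdim I)%N &
      (sepdim I <= n - #|LI le G|)%N].
Proof.
split; first by move=> V; apply: partA.
split.
- move=> d hd; rewrite /edim; case: ex_minnP => mm /asboolP [I' [f [fD fM f1 fZ [g fg gf]]]] _.
  exact: (cot_le HIM fD fM f1 fZ fg gf hd).
- have h0 : asbool (has_coh_sep I set0).
    by apply/asboolP; exists (fun _ => 0) => i; rewrite in_set0.
  have hA : (0 < #|(fun Z => asbool (has_coh_sep I Z)) : pred {set 'I_n}|)%N.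
    by apply/card_gt0P; exists set0.
  have [Z0 hZ0 e] := @eq_bigmax_cond _ (fun Z => asbool (has_coh_sep I Z)) (fun Z => #|Z|) hA.
  rewrite /sepdim e.
  move: hZ0 => /asboolP [F HF].
  have := elim_edim HF; rewrite /edim; case: ex_minnP => mm _ hmin /asboolP /hmin.
  have hc : #|~: Z0| = (n - #|Z0|)%N by rewrite cardsCs setCK card_ord.
  by rewrite hc.
- rewrite /sepdim leq_sub2l //.
  apply: (@leq_bigmax_cond _ (fun Z => asbool (has_coh_sep I Z)) (fun Z => #|Z|)).
  apply/asboolP; exact: coh_LI.
Qed.
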